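(* Let $\Sigma$ be a complete hyperbolic surface without cusps with metric $g$ and area form $dArea$, $\gamma$ a simple closed geodesic, and $R>0$ such that $B_R(\gamma)$ is isometric to $\gamma\times]-R,R[$ with metric $\cosh^2(r)dt^2+dr^2$. Let $(R_m)$, $(\phi_m)$, $(\psi_m)$ be sequences with $R_m<R$, $R_m\downarrow0$, $\phi_m,\psi_m\in C_0^\infty(]-R_m,R_m[)$, $\int_{-R_m}^{R_m}\cosh(s)\psi_m(s)ds=1$, and $(\|\psi_m\|_{L^1})$ uniformly bounded. Let $\tilde\kappa_m:=\left.\frac{\partial}{\partial s}\kappa_{s\phi_m,s\psi_m}\right|_{s=0}$, where $\kappa_{\phi,\psi}$ is the curvature of the metric $g_{\phi,\psi}$ equal to $(\cosh(r)dt-\phi(r)dr)^2+e^{2\psi(r)}dr^2$ on $B_R(\gamma)$ and to $g$ elsewhere. Then for every Lipschitz function $f$ on $\Sigma$, $$\lim_{m\to\infty}\int_\Sigma f\,\tilde\kappa_m\,dArea=\int_\gamma f\,dl.$$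
   Context: $t$ is an arc-length parameter of $\gamma$ and $r$ the signed distance to $\gamma$. *)

(* Defs.v *)
From Stdlib Require Import Reals.
From Coquelicot Require Import Coquelicot.
Open Scope R_scope.

Definition du (h : R -> R -> R) (u v : R) : R := Derive (fun x => h x v) u.
Definition dv (h : R -> R -> R) (u v : R) : R := Derive (fun y => h u y) v.

Definition det3 (a b c d e f g h i : R) : R :=
  a * (e * i - f * h) - b * (d * i - f * g) + c * (d * h - e * g).

(* Gaussian curvature of the metric  E du^2 + 2 F du dv + G dv^2
   (Brioschi formula). *)
Definition gauss_curv (E F G : R -> R -> R) (u v : R) : R :=
  (det3 (- dv (dv E) u v / 2 + du (dv F) u v - du (du G) u v / 2)
        (du E u v / 2) (du F u v - dv E u v / 2)
        (dv F u v - du G u v / 2) (E u v) (F u v)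
        (dv G u v / 2) (F u v) (G u v)
   - det3 0 (dv E u v / 2) (du G u v / 2)
          (dv E u v / 2) (E u v) (F u v)
          (du G u v / 2) (F u v) (G u v))
  / (E u v * G u v - F u v ^ 2) ^ 2.

(* Curvature kappa_{phi,psi}(t,r) of g_{phi,psi} = (cosh r dt - phi(r) dr)^2
   + e^{2 psi(r)} dr^2 on the collar, in collar coordinates (t,r). *)
Definition kappa (phi psi : R -> R) (t r : R) : R :=
  gauss_curv (fun _ r => cosh r ^ 2)
             (fun _ r => - (cosh r * phi r))
             (fun _ r => phi r ^ 2 + exp (2 * psi r)) t r.

Definition kappa_tilde (phi psi : R -> R) (t r : R) : R :=
  Derive (fun s => kappa (fun x => s * phi x) (fun x => s * psi x) t r) 0.

Definition smooth (f : R -> R) : Prop :=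
  forall n x, ex_derive (Derive_n f n) x.

(* f in C_0^infinity(]a,b[) (extended by 0 to R): smooth with compact
   support contained in ]a,b[. *)
Definition C0inf (a b : R) (f : R -> R) : Prop :=
  smooth f /\
  exists a' b', a < a' /\ b' < b /\ forall x, (x < a' \/ b' < x) -> f x = 0.

(* Main.v *)
Require Import Defs.
From Stdlib Require Import Reals Lra.
From Coquelicot Require Import Coquelicot.
Open Scope R_scope.

Lemma cmul (f g : R -> R) x : continuous f x -> continuous g x -> continuous (fun y => f y * g y) x.
Proof. intros; apply (continuous_mult f g); auto. Qed.
Lemma cplus (f g : R -> R) x : continuous f x -> continuous g x -> continuous (fun y => f y + g y) x.
Proof. intros; apply (continuous_plus f g); auto. Qed.
Lemma cminus (f g : R -> R) x : continuous f x -> continuous g x -> continuous (fun y => f y - g y) x.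
Proof. intros; apply (continuous_minus f g); auto. Qed.
Lemma cconst (c x : R) : continuous (fun _ => c) x.
Proof. apply continuous_const. Qed.
Lemma cid (x : R) : continuous (fun y => y) x.
Proof. apply continuous_id. Qed.
Lemma cshift (g : R -> R) d x : continuous g (x + d) -> continuous (fun y => g (y + d)) x.
Proof. intros; apply (continuous_comp (fun y => y + d) g); auto. apply cplus. apply cid. apply cconst. Qed.
Lemma cabs (g : R -> R) x : continuous g x -> continuous (fun y => Rabs (g y)) x.
Proof. intros; apply continuous_Rabs_comp; auto. Qed.

Lemma RInt_plusR (f g : R -> R) a b : ex_RInt f a b -> ex_RInt g a b ->
  RInt (fun x => f x + g x) a b = RInt f a b + RInt g a b.
Proof. intros; apply (RInt_plus f g); auto. Qed.
Lemma RInt_minusR (f g : R -> R) a b : ex_RInt f a b -> ex_RInt g a b ->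
  RInt (fun x => f x - g x) a b = RInt f a b - RInt g a b.
Proof. intros; apply (RInt_minus f g); auto. Qed.
Lemma RInt_scalR (f : R -> R) a b l : ex_RInt f a b ->
  RInt (fun x => l * f x) a b = l * RInt f a b.
Proof. intros; apply (RInt_scal f); auto. Qed.
Lemma RInt_zero a b : RInt (fun _ => 0) a b = 0.
Proof. rewrite RInt_const. unfold scal; simpl; unfold mult; simpl; ring. Qed.
Lemma RInt_zero_ext (f : R -> R) a b : (forall x, Rmin a b < x < Rmax a b -> f x = 0) -> RInt f a b = 0.
Proof. intros H. rewrite (RInt_ext f (fun _ => 0)); auto. apply RInt_zero. Qed.
Lemma ex_cont (f : R -> R) a b : (forall x, continuous f x) -> ex_RInt f a b.
Proof. intros; apply (ex_RInt_continuous (V:=R_CompleteNormedModule)); auto. Qed.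
Lemma chasles (f : R -> R) a b c : (forall x, continuous f x) -> RInt f a b + RInt f b c = RInt f a c.
Proof. intros; apply (RInt_Chasles f); apply ex_cont; auto. Qed.

Lemma cont_pt (f : R -> R) x : continuous f x -> continuity_pt f x.
Proof. intros; apply continuity_pt_filterlim; auto. Qed.

Lemma lip_cont (g : R -> R) K x : (forall y, Rabs (g y - g x) <= K * Rabs (y - x)) -> continuous g x.
Proof.
intros H. apply continuity_pt_filterlim.
intros eps He. exists (eps / (Rabs K + 1)). split.
{ apply Rdiv_lt_0_compat; auto. generalize (Rabs_pos K); lra. }
intros y [_ Hy]. simpl in *. unfold R_dist in *.
eapply Rle_lt_trans. apply H.
assert (0 <= Rabs (y - x)) by apply Rabs_pos.
assert (Rabs K * Rabs (y - x) < eps).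
{ assert (Hk := Rabs_pos K).
  apply Rle_lt_trans with (Rabs K * (eps / (Rabs K + 1))).
  apply Rmult_le_compat_l; lra.
  replace (Rabs K * (eps / (Rabs K + 1))) with (eps * (Rabs K / (Rabs K + 1))) by (field; lra).
  rewrite <- (Rmult_1_r eps) at 2. apply Rmult_lt_compat_l; auto.
  apply Rmult_lt_reg_r with (Rabs K + 1). lra. unfold Rdiv. rewrite Rmult_assoc, Rinv_l; lra. }
assert (K * Rabs (y - x) <= Rabs K * Rabs (y - x)).
{ apply Rmult_le_compat_r; auto. apply Rle_abs. }
lra.
Qed.

Lemma exd_cont (f : R -> R) x : ex_derive f x -> continuous f x.
Proof. intros H. apply (ex_derive_continuous (K:=R_AbsRing) (V:=R_NormedModule) f x H). Qed.

Lemma cosh_pos x : 0 < cosh x.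
Proof. unfold cosh. generalize (exp_pos x) (exp_pos (-x)). lra. Qed.

Lemma exp_le x y : x <= y -> exp x <= exp y.
Proof. intros [H|H]. left; apply exp_increasing; auto. subst; lra. Qed.
Lemma abs_betw x A : Rabs x <= A -> - A <= x <= A.
Proof. unfold Rabs; destruct (Rcase_abs x); lra. Qed.

Lemma cosh_le x A : Rabs x <= A -> cosh x <= exp A.
Proof.
intros H. unfold cosh. unfold Rabs in H. destruct (Rcase_abs x);
assert (exp x <= exp A) by (apply exp_le; lra);
assert (exp (-x) <= exp A) by (apply exp_le; lra); lra.
Qed.

Lemma sinh_lip x y A : Rabs x <= A -> Rabs y <= A -> Rabs (sinh x - sinh y) <= exp A * Rabs (x - y).
Proof.
intros Hx Hy.
destruct (MVT_gen sinh y x cosh) as [c [Hc Heq]].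
{ intros z _. auto_derive; auto. unfold cosh, sinh. field. }
{ intros z _. apply cont_pt. apply exd_cont. auto_derive; auto. }
rewrite Heq, Rabs_mult. apply Rmult_le_compat_r. apply Rabs_pos.
rewrite Rabs_pos_eq. 2: left; apply cosh_pos.
apply cosh_le. destruct Hc as [H1 H2].
assert (-A <= y <= A) by (apply abs_betw; auto). assert (-A <= x <= A) by (apply abs_betw; auto).
assert (-A <= Rmin y x) by (apply Rmin_glb; lra). assert (Rmax y x <= A) by (apply Rmax_lub; lra).
apply Rabs_le; lra.
Qed.


Ltac toR := match goal with |- ?u = ?v => change (@eq R u v) end.

Lemma small_delta X Y A d0 : 0 < d0 -> 0 <= A -> (forall d, 0 < d < d0 -> X <= Y + A * d) -> X <= Y.
Proof.
intros H0 HA H1. destruct (Rle_or_lt X Y) as [h|h]; auto. exfalso.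
set (d := Rmin (d0/2) ((X - Y)/(2*(A+1)))).
assert (0 < d) by (apply Rmin_pos; [lra | apply Rdiv_lt_0_compat; lra]).
assert (d <= d0/2) by apply Rmin_l. assert (d <= (X-Y)/(2*(A+1))) by apply Rmin_r.
specialize (H1 d ltac:(lra)).
assert (A*d <= A*((X-Y)/(2*(A+1)))) by (apply Rmult_le_compat_l; lra).
assert (A*((X-Y)/(2*(A+1))) < X - Y).
{ apply Rmult_lt_reg_r with (2*(A+1)); [lra|].
  replace (A * ((X - Y) / (2 * (A + 1))) * (2 * (A + 1))) with (A*(X-Y)) by (field; lra). nra. }
lra.
Qed.

Lemma mvt_bound (f : R -> R) x y M :
  (forall z, ex_derive f z) -> (forall z, continuous f z) ->
  (forall z, Rmin x y <= z <= Rmax x y -> Rabs (Derive f z) <= M) ->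
  Rabs (f y - f x) <= M * Rabs (y - x).
Proof.
intros Hd Hc Hb.
destruct (MVT_gen f x y (Derive f)) as [c [Hc1 Heq]].
{ intros z _. apply Derive_correct; auto. }
{ intros z _. apply cont_pt; auto. }
rewrite Heq, Rabs_mult. apply Rmult_le_compat_r. apply Rabs_pos. apply Hb; auto.
Qed.

Lemma ibp_bound a b a' b' K (g H : R -> R) :
 a < b -> a < a' -> b' < b -> 0 <= K ->
 (forall x, ex_derive g x) -> (forall x, ex_derive (Derive g) x) ->
 (forall x, ex_derive (Derive (Derive g)) x) ->
 (forall x, x < a' \/ b' < x -> g x = 0) ->
 (forall x, continuous H x) ->
 (forall x y, a <= x <= b -> a <= y <= b -> Rabs (H x - H y) <= K * Rabs (x - y)) ->
 Rabs (RInt (fun x => H x * Derive g x) a b) <= K * RInt (fun x => Rabs (g x)) a b.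
Proof.
intros hab ha hb hK d1 d2 d3 supp cH lipH.
assert (cg : forall x, continuous g x) by (intros; apply exd_cont; auto).
assert (cg1 : forall x, continuous (Derive g) x) by (intros; apply exd_cont; auto).
assert (cg2 : forall x, continuous (Derive (Derive g)) x) by (intros; apply exd_cont; auto).
destruct (continuity_ab_maj (fun x => Rabs (Derive (Derive g) x)) a (b+1)) as [xm [Hxm _]].
{ lra. } { intros; apply cont_pt; apply cabs; auto. }
set (M := Rabs (Derive (Derive g) xm)).
assert (HM0 : 0 <= M) by apply Rabs_pos.
set (S := Rabs (H a) + K * (b - a)).
assert (HS : forall x, a <= x <= b -> Rabs (H x) <= S).
{ intros x hx. specialize (lipH x a hx ltac:(lra)).
  assert (Rabs (x - a) <= b - a) by (rewrite Rabs_pos_eq; lra).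
  assert (Rabs (H x) <= Rabs (H a) + Rabs (H x - H a)).
  { replace (H x) with (H a + (H x - H a)) at 1 by ring. apply Rabs_triang. }
  unfold S. assert (K * Rabs (x - a) <= K * (b-a)) by (apply Rmult_le_compat_l; lra). lra. }
assert (HS0 : 0 <= S). { generalize (HS a ltac:(lra)) (Rabs_pos (H a)). lra. }
apply (small_delta _ _ ((b - a) * (S * M)) (Rmin 1 (Rmin (a' - a) (b - b')))).
{ repeat apply Rmin_pos; lra. }
{ apply Rmult_le_pos; [lra| apply Rmult_le_pos; auto]. }
intros d [hd0 hd1].
assert (hd1' : d < 1) by (apply Rlt_le_trans with (1:=hd1); apply Rmin_l).
assert (hd2 : d < a' - a) by (apply Rlt_le_trans with (1:=hd1); eapply Rle_trans; [apply Rmin_r | apply Rmin_l]).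
assert (hd3 : d < b - b') by (apply Rlt_le_trans with (1:=hd1); eapply Rle_trans; [apply Rmin_r | apply Rmin_r]).
set (Dg := fun x => (g (x + d) - g x) / d).
assert (cDg : forall x, continuous Dg x).
{ intro x. unfold Dg, Rdiv. apply cmul; [apply cminus; [apply cshift; auto | auto] | apply cconst]. }
rewrite (RInt_ext (fun x => H x * Derive g x) (fun x => H x * (Derive g x - Dg x) + H x * Dg x)).
2:{ intros; toR; ring. }
rewrite RInt_plusR.
2:{ apply ex_cont; intro; apply cmul; auto; apply cminus; auto. }
2:{ apply ex_cont; intro; apply cmul; auto. }
assert (B1 : Rabs (RInt (fun x => H x * (Derive g x - Dg x)) a b) <= (b - a) * (S * (M * d))).
{ apply abs_RInt_le_const; [lra | apply ex_cont; intro; apply cmul; auto; apply cminus; auto | ].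
  intros x hx. rewrite Rabs_mult. apply Rmult_le_compat; try apply Rabs_pos; auto.
  destruct (MVT_gen g x (x+d) (Derive g)) as [c [hc heq]].
  { intros; apply Derive_correct; auto. }
  { intros; apply cont_pt; auto. }
  rewrite Rmin_left in hc by lra. rewrite Rmax_right in hc by lra.
  assert (Dg x = Derive g c) by (unfold Dg; rewrite heq; field; lra).
  rewrite H0.
  rewrite <- Rabs_Ropp. replace (- (Derive g x - Derive g c)) with (Derive g c - Derive g x) by ring.
  eapply Rle_trans. apply (mvt_bound (Derive g) x c M); auto.
  { intros z hz. rewrite Rmin_left in hz by lra. rewrite Rmax_right in hz by lra. apply Hxm. lra. }
  apply Rmult_le_compat_l; auto. rewrite Rabs_pos_eq; lra. }
set (f := fun u => H (u - d) * g u).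
assert (cf : forall x, continuous f x).
{ intro x. unfold f. apply cmul; auto. unfold Rminus. apply cshift; auto. }
assert (E1 : RInt (fun x => H x * Dg x) a b = / d * (RInt (fun x => H x * g (x + d)) a b - RInt (fun x => H x * g x) a b)).
{ rewrite <- RInt_minusR, <- RInt_scalR.
  - apply RInt_ext; intros; toR; unfold Dg; field; lra.
  - apply ex_cont; intro; apply cminus; apply cmul; auto; apply cshift; auto.
  - apply ex_cont; intro; apply cmul; auto; apply cshift; auto.
  - apply ex_cont; intro; apply cmul; auto. }
assert (E2 : RInt (fun x => H x * g (x + d)) a b = RInt f a b).
{ transitivity (RInt f (1*a+d) (1*b+d)).
  { rewrite <- (RInt_comp_lin (V:=R_CompleteNormedModule) f 1 d a b) by (apply ex_cont; auto).
    apply RInt_ext; intros x _. unfold f, scal; simpl; unfold mult; simpl. toR.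
    replace (1 * x + d - d) with x by ring. replace (1 * x + d) with (x + d) by ring. ring. }
  replace (1 * a + d) with (a + d) by ring. replace (1 * b + d) with (b + d) by ring.
  rewrite <- (chasles f (a+d) a (b+d)), <- (chasles f a b (b+d)); auto.
  rewrite (RInt_zero_ext f (a+d) a), (RInt_zero_ext f b (b+d)). toR. ring.
  - intros x hx. rewrite Rmin_left in hx by lra. rewrite Rmax_right in hx by lra.
    unfold f. rewrite supp. toR. ring. right; lra.
  - intros x hx. rewrite Rmin_right in hx by lra. rewrite Rmax_left in hx by lra.
    unfold f. rewrite supp. toR. ring. left; lra. }
assert (E3 : RInt (fun x => H x * Dg x) a b = RInt (fun u => (H (u - d) - H u) / d * g u) a b).
{ rewrite E1, E2. rewrite <- RInt_minusR, <- RInt_scalR.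
  - apply RInt_ext; intros; toR; unfold f; field; lra.
  - apply ex_cont; intro; apply cminus; auto; apply cmul; auto.
  - apply ex_cont; auto.
  - apply ex_cont; intro; apply cmul; auto. }
assert (B2 : Rabs (RInt (fun x => H x * Dg x) a b) <= K * RInt (fun x => Rabs (g x)) a b).
{ rewrite E3.
  assert (cq : forall x, continuous (fun u => (H (u - d) - H u) / d * g u) x).
  { intro x. unfold Rdiv. apply cmul; auto. apply cmul; [|apply cconst]. apply cminus; auto.
    unfold Rminus. apply cshift; auto. }
  eapply Rle_trans; [apply abs_RInt_le; [lra | apply ex_cont; auto]|].
  rewrite <- RInt_scalR by (apply ex_cont; intro; apply cabs; auto).
  apply RInt_le; [lra | apply ex_cont; intro; apply cabs; auto | apply ex_cont; intro; apply cmul; [apply cconst | apply cabs; auto] | ].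
  intros u hu.
  destruct (Req_dec (g u) 0) as [z|nz].
  { rewrite z, Rmult_0_r, Rabs_R0. lra. }
  assert (a' <= u <= b').
  { split; apply Rnot_lt_le; intro h; apply nz; apply supp; auto. }
  rewrite Rabs_mult. apply Rmult_le_compat_r; [apply Rabs_pos|].
  unfold Rdiv. rewrite Rabs_mult, (Rabs_pos_eq (/ d)) by (left; apply Rinv_0_lt_compat; lra).
  apply Rmult_le_reg_r with d; [lra|]. rewrite Rmult_assoc, Rinv_l by lra. rewrite Rmult_1_r.
  eapply Rle_trans; [apply lipH; lra|].
  replace (u - d - u) with (-d) by ring. rewrite Rabs_Ropp, Rabs_pos_eq; lra. }
eapply Rle_trans; [apply Rabs_triang|].
replace ((b - a) * (S * M) * d) with ((b - a) * (S * (M * d))) by ring.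
lra.
Qed.


Lemma kappa_tilde_eq (phi psi : R -> R) t r :
  (forall x, ex_derive phi x) -> (forall x, ex_derive psi x) ->
  kappa_tilde phi psi t r * cosh r = 2 * cosh r * psi r + sinh r * Derive psi r.
Proof.
intros Hp Hq.
set (c := cosh r). set (sh := sinh r).
set (p := phi r). set (p' := Derive phi r). set (q := psi r). set (q' := Derive psi r).
set (E := c ^ 2). set (Ev := 2 * c * sh). set (Evv := 2 * (sh * sh + c * c)).
set (F := fun s => - (c * (s * p))).
set (Fv := fun s => - (sh * (s * p) + c * (s * p'))).
set (G := fun s => (s * p) ^ 2 + exp (2 * (s * q))).
set (Gv := fun s => 2 * (s * p) * (s * p') + 2 * (s * q') * exp (2 * (s * q))).
set (Kf := fun s => (det3 (- Evv / 2 + 0 - 0 / 2) (0 / 2) (0 - Ev / 2)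
        (Fv s - 0 / 2) E (F s)
        (Gv s / 2) (F s) (G s)
   - det3 0 (Ev / 2) (0 / 2)
          (Ev / 2) E (F s)
          (0 / 2) (F s) (G s))
  / (E * G s - F s ^ 2) ^ 2).
assert (key : forall s, kappa (fun x => s * phi x) (fun x => s * psi x) t r = Kf s).
{ intro s. unfold kappa, gauss_curv, du, dv. cbv beta.
  rewrite (Derive_ext (fun x => Derive (fun _ => (s * phi r) ^ 2 + exp (2 * (s * psi r))) x) (fun _ => 0)); [ | intro; apply Derive_const].
  rewrite !Derive_const.
  assert (D1 : forall y, Derive (fun y0 => cosh y0 ^ 2) y = 2 * cosh y * sinh y).
  { intro y. apply is_derive_unique. auto_derive; auto; ring. }
  rewrite (Derive_ext _ _ _ D1), D1.
  replace (Derive (fun y => 2 * cosh y * sinh y) r) with Evv.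
  2:{ symmetry. apply is_derive_unique. unfold Evv, c, sh. auto_derive; auto; ring. }
  replace (Derive (fun y => - (cosh y * (s * phi y))) r) with (Fv s).
  2:{ symmetry. apply is_derive_unique. unfold Fv, sh, p, c, p'.
      auto_derive; [ apply Hp | ]. rewrite !Rmult_1_l; reflexivity. }
  replace (Derive (fun y => (s * phi y) ^ 2 + exp (2 * (s * psi y))) r) with (Gv s).
  2:{ symmetry. apply is_derive_unique. unfold Gv, p, p', q, q'.
      auto_derive; [ repeat split; auto | ].
      change (Derive (fun x => phi x) r) with p'.
      change (Derive (fun x => psi x) r) with q'. unfold p', q'. ring. }
  reflexivity. }
unfold kappa_tilde. rewrite (Derive_ext _ _ _ key).
assert (Hc : c <> 0). { unfold c, cosh. apply Rgt_not_eq. generalize (exp_pos r) (exp_pos (-r)). lra. }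
rewrite (is_derive_unique Kf 0 ((2 * c * q + sh * q') / c)).
{ field. exact Hc. }
unfold Kf, F, G, Fv, Gv, det3. auto_derive.
all: replace (2 * (0 * q)) with 0 by ring; rewrite exp_0.
{ match goal with |- ?X <> 0 => replace X with ((c^2)*(c^2)) by (unfold E; ring) end.
  apply Rmult_integral_contrapositive_currified; apply pow_nonzero; auto. }
unfold E, Ev, Evv. field. exact Hc.
Qed.


Lemma deriv_zero_out (g : R -> R) a' b' x :
  (forall y, y < a' \/ b' < y -> g y = 0) -> x < a' \/ b' < x -> Derive g x = 0.
Proof.
intros H hx. rewrite (Derive_ext_loc g (fun _ => 0)). apply Derive_const.
destruct hx as [hx|hx].
- assert (hp : 0 < a' - x) by lra. exists (mkposreal _ hp). intros y hy.
  apply H. left. unfold ball in hy; simpl in hy. unfold AbsRing_ball, abs, minus, plus, opp in hy; simpl in hy.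
  apply Rabs_def2 in hy. lra.
- assert (hp : 0 < x - b') by lra. exists (mkposreal _ hp). intros y hy.
  apply H. right. unfold ball in hy; simpl in hy. unfold AbsRing_ball, abs, minus, plus, opp in hy; simpl in hy.
  apply Rabs_def2 in hy. lra.
Qed.

Lemma ccosh x : continuous cosh x.
Proof. apply exd_cont. auto_derive; auto. Qed.
Lemma csinh x : continuous sinh x.
Proof. apply exd_cont. auto_derive; auto. Qed.

Theorem lemma3p6
  (L Rc : R) (HL : 0 < L) (HR : 0 < Rc)
  (Rm : nat -> R) (phi psi : nat -> R -> R)
  (HRm_pos : forall m, 0 < Rm m)
  (HRm_lt : forall m, Rm m < Rc)
  (HRm_dec : forall m, Rm (S m) <= Rm m)
  (HRm_lim : is_lim_seq Rm 0)
  (Hphi : forall m, C0inf (- Rm m) (Rm m) (phi m))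
  (Hpsi : forall m, C0inf (- Rm m) (Rm m) (psi m))
  (Hnorm : forall m, RInt (fun s => cosh s * psi m s) (- Rm m) (Rm m) = 1)
  (HL1 : exists B, forall m, RInt (fun s => Rabs (psi m s)) (- Rm m) (Rm m) <= B)
  (f : R -> R -> R)
  (Hper : forall t r, f (t + L) r = f t r)
  (Hlip : exists C, forall t t' r r', - Rc < r < Rc -> - Rc < r' < Rc ->
            Rabs (f t r - f t' r') <= C * (Rabs (t - t') + Rabs (r - r'))) :
  is_lim_seq
    (fun m => RInt (fun t => RInt (fun r =>
                 f t r * kappa_tilde (phi m) (psi m) t r * cosh r) (- Rc) Rc) 0 L)
    (RInt (fun t => f t 0) 0 L).
Proof.
destruct Hlip as [C HC]. destruct HL1 as [B HB].
assert (HC0 : 0 <= C).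
{ specialize (HC 1 0 0 0 ltac:(lra) ltac:(lra)). replace (1-0) with 1 in HC by ring.
  replace (0-0) with 0 in HC by ring. rewrite Rabs_R1, Rabs_R0 in HC.
  generalize (Rabs_pos (f 1 0 - f 0 0)). lra. }
set (R0 := Rm 0%nat).
assert (HR0 : forall m, Rm m <= R0). { induction m. unfold R0; lra. specialize (HRm_dec m). lra. }
assert (HR0c : R0 < Rc) by apply HRm_lt.
assert (HR0p : 0 < R0) by apply HRm_pos.
set (cl := fun r => Rmax (-R0) (Rmin R0 r)).
assert (cl_in : forall r, -R0 <= cl r <= R0).
{ intro r; unfold cl, Rmax, Rmin; repeat destruct Rle_dec; lra. }
assert (cl_lip : forall x y, Rabs (cl x - cl y) <= Rabs (x - y)).
{ intros x y; unfold cl, Rmax, Rmin; repeat destruct Rle_dec; unfold Rabs; repeat destruct Rcase_abs; lra. }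
assert (cl_id : forall r, -R0 <= r <= R0 -> cl r = r).
{ intros r hr; unfold cl, Rmax, Rmin; repeat destruct Rle_dec; lra. }
set (fh := fun t r => f t (cl r)).
assert (fh_lip : forall t t' r r', Rabs (fh t r - fh t' r') <= C * (Rabs (t - t') + Rabs (r - r'))).
{ intros. unfold fh. eapply Rle_trans. apply HC; generalize (cl_in r) (cl_in r'); lra.
  apply Rmult_le_compat_l; auto. generalize (cl_lip r r'); lra. }
assert (cfh : forall t x, continuous (fh t) x).
{ intros t x. apply (lip_cont _ C). intro y. eapply Rle_trans. apply fh_lip.
  replace (t - t) with 0 by ring. rewrite Rabs_R0, Rplus_0_l. lra. }
assert (f0 : forall t, fh t 0 = f t 0).
{ intro; unfold fh; rewrite cl_id; lra. }
set (c0 := 4 * C * exp Rc * B).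
assert (Main : forall m, exists J : R -> R,
  (forall t, RInt (fun r => f t r * kappa_tilde (phi m) (psi m) t r * cosh r) (-Rc) Rc = J t) /\
  (forall x, continuous J x) /\ (forall t, Rabs (J t - f t 0) <= c0 * Rm m)).
{ intro m.
  destruct (Hpsi m) as [sm [a' [b' [ha' [hb' supp]]]]].
  destruct (Hphi m) as [smp _].
  set (ps := psi m) in *.
  assert (d0 : forall x, ex_derive ps x) by exact (fun x => sm 0%nat x).
  assert (d1 : forall x, ex_derive (Derive ps) x) by exact (fun x => sm 1%nat x).
  assert (d2 : forall x, ex_derive (Derive (Derive ps)) x) by exact (fun x => sm 2%nat x).
  assert (dphi : forall x, ex_derive (phi m) x) by exact (fun x => smp 0%nat x).
  assert (cps : forall x, continuous ps x) by (intros; apply exd_cont; auto).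
  assert (cdps : forall x, continuous (Derive ps) x) by (intros; apply exd_cont; auto).
  set (k := fun r => 2 * cosh r * ps r + sinh r * Derive ps r).
  assert (ck : forall x, continuous k x).
  { intro x. unfold k. apply cplus; apply cmul; auto; try apply csinh. apply cmul. apply cconst. apply ccosh. }
  assert (kz : forall x, x < a' \/ b' < x -> k x = 0).
  { intros x hx. unfold k. rewrite (supp x hx), (deriv_zero_out ps a' b' x supp hx). ring. }
  set (a := - Rm m). set (b := Rm m).
  assert (hab : a < b) by (unfold a, b; generalize (HRm_pos m); lra).
  assert (hRm : Rm m <= R0) by auto.
  assert (hRmc : Rm m < Rc) by auto.
  Ltac ct := repeat (first [ assumption | apply cconst | apply ccosh | apply csinh | apply cabs
                        | apply cmul | apply cplus | apply cminus ]).
  exists (fun t => RInt (fun r => fh t r * k r) a b).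
  split; [|split].
  - intro t.
    assert (cfk : forall x, continuous (fun r => fh t r * k r) x) by (intro; apply cmul; auto).
    rewrite (RInt_ext _ (fun r => fh t r * k r)).
    2:{ intros x hx. toR. rewrite Rmult_assoc, (kappa_tilde_eq (phi m) ps t x dphi d0).
        change (2 * cosh x * ps x + sinh x * Derive ps x) with (k x).
        destruct (Rle_dec (Rabs x) R0) as [hx0|hx0].
        - unfold fh. rewrite cl_id; auto. apply abs_betw; auto.
        - rewrite kz. ring. unfold Rabs in hx0; destruct (Rcase_abs x); [left|right]; lra. }
    rewrite <- (chasles _ (-Rc) a Rc), <- (chasles _ a b Rc); auto.
    rewrite (RInt_zero_ext _ (-Rc) a), (RInt_zero_ext _ b Rc). toR. ring.
    + intros x hx. unfold a, b in *. rewrite Rmin_left in hx by lra. rewrite Rmax_right in hx by lra.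
      rewrite kz. toR; ring. first [left; lra | right; lra].
    + intros x hx. unfold a, b in *. rewrite Rmin_left in hx by lra. rewrite Rmax_right in hx by lra.
      rewrite kz. toR; ring. first [left; lra | right; lra].
  - intro x. apply (lip_cont _ (C * RInt (fun r => Rabs (k r)) a b)). intro y.
    rewrite <- RInt_minusR by (apply ex_cont; intro; apply cmul; auto).
    eapply Rle_trans. apply abs_RInt_le; [lra | apply ex_cont; intro; apply cminus; apply cmul; auto].
    apply Rle_trans with (RInt (fun r => (C * Rabs (y - x)) * Rabs (k r)) a b).
    + apply RInt_le; [lra | apply ex_cont; intro; apply cabs; apply cminus; apply cmul; auto
                     | apply ex_cont; intro; apply cmul; [apply cconst | apply cabs; auto] | ].
      intros r hr. replace (fh y r * k r - fh x r * k r) with ((fh y r - fh x r) * k r) by ring.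
      rewrite Rabs_mult. apply Rmult_le_compat_r; [apply Rabs_pos|].
      eapply Rle_trans; [apply fh_lip|]. replace (r - r) with 0 by ring. rewrite Rabs_R0. lra.
    + rewrite RInt_scalR by (apply ex_cont; intro; apply cabs; auto). right; ring.
  - intro t.
    set (h0 := fh t 0).
    set (Hf := fun r => (fh t r - h0) * sinh r).
    assert (cHf : forall x, continuous Hf x).
    { intro x. unfold Hf. apply cmul; [apply cminus; auto; apply cconst | apply csinh]. }
    assert (c1 : forall x, continuous (fun r => (fh t r - h0) * (2 * cosh r * ps r)) x).
    { intro x. apply cmul. apply cminus; auto; apply cconst. apply cmul; auto. apply cmul. apply cconst. apply ccosh. }
    assert (c2 : forall x, continuous (fun r => Hf r * Derive ps r) x).
    { intro x. apply cmul; auto. }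
    assert (Hsplit : RInt (fun r => fh t r * k r) a b =
       h0 * RInt k a b + RInt (fun r => (fh t r - h0) * (2 * cosh r * ps r)) a b
       + RInt (fun r => Hf r * Derive ps r) a b).
    { rewrite <- RInt_scalR, <- RInt_plusR, <- RInt_plusR.
      - apply RInt_ext; intros; toR; unfold k, Hf; ring.
      - apply ex_cont; intro; apply cplus; auto. apply cmul; auto; apply cconst.
      - apply ex_cont; auto.
      - apply ex_cont; intro; apply cmul; auto; apply cconst.
      - apply ex_cont; auto.
      - apply ex_cont; auto. }
    assert (Hk1 : RInt k a b = 1).
    { assert (Gd : forall x, is_derive (fun r => sinh r * ps r) x (cosh x * ps x + sinh x * Derive ps x)).
      { intro x. auto_derive. apply d0. toR. change (Derive (fun x => ps x) x) with (Derive ps x). ring. }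
      assert (cG : forall x, continuous (fun x => cosh x * ps x + sinh x * Derive ps x) x).
      { intro x. apply cplus; apply cmul; auto. apply ccosh. apply csinh. }
      assert (HI := is_RInt_derive (fun r => sinh r * ps r) (fun x => cosh x * ps x + sinh x * Derive ps x) a b
                      (fun x _ => Gd x) (fun x _ => cG x)).
      apply is_RInt_unique in HI.
      rewrite (supp a) in HI by (left; unfold a; lra). rewrite (supp b) in HI by (right; unfold b; lra).
      assert (HI0 : RInt (fun x => cosh x * ps x + sinh x * Derive ps x) a b = 0).
      { rewrite HI. unfold minus, plus, opp; simpl. ring. }
      rewrite (RInt_ext k (fun x => cosh x * ps x + (cosh x * ps x + sinh x * Derive ps x))).
      2:{ intros; toR; unfold k; ring. }
      rewrite RInt_plusR, HI0.
      - unfold a, b, ps. rewrite Hnorm, Rplus_0_r. reflexivity.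
      - apply ex_cont; intro; apply cmul; auto; apply ccosh.
      - apply ex_cont; auto. }
    assert (Kpos : 0 <= 2 * C * exp Rc * Rm m).
    { apply Rmult_le_pos. apply Rmult_le_pos. lra. left; apply exp_pos. left; auto. }
    assert (Hx : forall x, a <= x <= b -> Rabs x <= Rm m).
    { intros x hx. apply Rabs_le. unfold a, b in hx. lra. }
    assert (Hfh0 : forall x, a <= x <= b -> Rabs (fh t x - h0) <= C * Rm m).
    { intros x hx. unfold h0. eapply Rle_trans; [apply fh_lip|].
      replace (t - t) with 0 by ring. replace (x - 0) with x by ring. rewrite Rabs_R0, Rplus_0_l.
      apply Rmult_le_compat_l; auto. }
    assert (B1 : Rabs (RInt (fun r => (fh t r - h0) * (2 * cosh r * ps r)) a b) <= 2 * C * exp Rc * Rm m * B).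
    { eapply Rle_trans. apply abs_RInt_le; [lra | apply ex_cont; auto].
      apply Rle_trans with (RInt (fun r => (2 * C * exp Rc * Rm m) * Rabs (ps r)) a b).
      - apply RInt_le; [lra | apply ex_cont; intro; apply cabs; auto
                       | apply ex_cont; intro; apply cmul; [apply cconst | apply cabs; auto] | ].
        intros x hx.
        assert (hx' : a <= x <= b) by lra.
        rewrite Rabs_mult, Rabs_mult, (Rabs_pos_eq (2 * cosh x)) by (generalize (cosh_pos x); lra).
        rewrite <- Rmult_assoc. apply Rmult_le_compat_r; [apply Rabs_pos|].
        apply Rle_trans with ((C * Rm m) * (2 * exp Rc)); [| right; ring].
        apply Rmult_le_compat; auto. apply Rabs_pos. generalize (cosh_pos x); lra.
        assert (cosh x <= exp Rc) by (apply cosh_le; generalize (Hx x hx'); lra). lra.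
      - rewrite RInt_scalR by (apply ex_cont; intro; apply cabs; auto).
        apply Rmult_le_compat_l; auto. apply HB. }
    assert (B2 : Rabs (RInt (fun r => Hf r * Derive ps r) a b) <= 2 * C * exp Rc * Rm m * B).
    { eapply Rle_trans.
      apply (ibp_bound a b a' b' (2 * C * exp Rc * Rm m) ps Hf); auto.
      2: { apply Rmult_le_compat_l; auto. apply HB. }
      intros x y hx hy. unfold Hf.
      replace ((fh t x - h0) * sinh x - (fh t y - h0) * sinh y)
        with ((fh t x - fh t y) * sinh x + (fh t y - h0) * (sinh x - sinh y)) by ring.
      eapply Rle_trans; [apply Rabs_triang|]. rewrite !Rabs_mult.
      assert (A1 : Rabs (fh t x - fh t y) <= C * Rabs (x - y)).
      { eapply Rle_trans; [apply fh_lip|]. replace (t - t) with 0 by ring. rewrite Rabs_R0, Rplus_0_l. lra. }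
      assert (A2 : Rabs (sinh x) <= exp Rc * Rm m).
      { replace (sinh x) with (sinh x - sinh 0) by (rewrite sinh_0; ring).
        eapply Rle_trans. apply (sinh_lip x 0 Rc). generalize (Hx x hx); lra. rewrite Rabs_R0; lra.
        replace (x - 0) with x by ring. apply Rmult_le_compat_l. left; apply exp_pos. auto. }
      assert (A3 := Hfh0 y hy).
      assert (A4 : Rabs (sinh x - sinh y) <= exp Rc * Rabs (x - y)).
      { apply sinh_lip; generalize (Hx x hx) (Hx y hy); lra. }
      apply Rle_trans with (C * Rabs (x - y) * (exp Rc * Rm m) + C * Rm m * (exp Rc * Rabs (x - y))).
      + apply Rplus_le_compat; apply Rmult_le_compat; try apply Rabs_pos; auto.
      + right; ring. }
    simpl. rewrite Hsplit, Hk1, <- f0. fold h0.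
    replace (h0 * 1 + RInt (fun r => (fh t r - h0) * (2 * cosh r * ps r)) a b +
       RInt (fun r => Hf r * Derive ps r) a b - h0)
      with (RInt (fun r => (fh t r - h0) * (2 * cosh r * ps r)) a b +
       RInt (fun r => Hf r * Derive ps r) a b) by ring.
    eapply Rle_trans; [apply Rabs_triang|].
    unfold c0. replace (4 * C * exp Rc * B * b) with (2 * C * exp Rc * Rm m * B + 2 * C * exp Rc * Rm m * B) by (unfold b; ring). lra. }
set (X := RInt (fun t => f t 0) 0 L).
assert (cf0 : forall x, continuous (fun t => f t 0) x).
{ intro x. apply (lip_cont _ C). intro y. eapply Rle_trans. apply HC; lra.
  replace (0 - 0) with 0 by ring. rewrite Rabs_R0, Rplus_0_r. lra. }
assert (Hl : is_lim_seq (fun m => L * c0 * Rm m) 0).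
{ replace (Finite 0) with (Rbar_mult (L * c0) 0) by (simpl; f_equal; ring).
  apply is_lim_seq_scal_l; auto. }
apply is_lim_seq_le_le with (u := fun m => X - L * c0 * Rm m) (w := fun m => X + L * c0 * Rm m).
- intro m. destruct (Main m) as [J [HJ1 [HJ2 HJ3]]].
  rewrite (RInt_ext _ J) by (intros; apply HJ1).
  assert (Hb : Rabs (RInt J 0 L - X) <= (L - 0) * (c0 * Rm m)).
  { unfold X. rewrite <- RInt_minusR by (apply ex_cont; auto).
    apply abs_RInt_le_const; [lra | apply ex_cont; intro; apply cminus; auto | ].
    intros; apply HJ3. }
  apply abs_betw in Hb. split; nra.
- assert (H1 := is_lim_seq_minus' (fun _ => X) _ X 0 (is_lim_seq_const X) Hl).
  rewrite Rminus_0_r in H1. exact H1.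
- assert (H1 := is_lim_seq_plus' (fun _ => X) _ X 0 (is_lim_seq_const X) Hl).
  rewrite Rplus_0_r in H1. exact H1.
Qed.
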